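(* Let $\Lambda$ be a set with $1\leq|\Lambda|\leq\omega$. For every $\lambda\in\Lambda$ let $\mathbf{H}(\lambda)$ be a $\pi$-tree on a topological space $X_\lambda$ such that $\mathrm{cofin}\,\omega\gg\mathrm{Rise}_{\mathbf{H}(\lambda)}(X_\lambda)$. Let $Y$ be a topological space that has a $\pi$-tree. Then the Tychonoff product $Y\times\prod_{\lambda\in\Lambda}X_\lambda$ has a $\pi$-tree.
   Context: $\mathrm{cofin}\,\omega=\{\omega\setminus F: F\subseteq\omega\text{ finite}\}$. Neighbourhoods are not necessarily open. $\omega=\{0,1,2,\dots\}$, ${}^{<\omega}\omega$ is the set of finite sequences of natural numbers. A tree is a strict partial order in which the set of predecessors of every node is well-ordered; $\mathrm{height}(x)$ is the ordinal isomorphic to the set of predecessors of $x$; a branch is a maximal chain; $\mathrm{sons}(x)$ is the set of immediate successors of $x$; $0$ denotes the least node. A foliage tree is a pair $\mathbf{F}=(T,l)$ with $T$ a tree (skeleton) and $l$ a function on its nodes, $\mathbf{F}_x:=l(x)$; tree notions apply via the skeleton. $\mathrm{shoot}_{\mathbf{F}}(v)=\{\bigcup_{x\in C}\mathbf{F}_x: C\text{ a cofinite subset of }\mathrm{sons}_{\mathbf{F}}(v)\}$; $\mathrm{scope}_{\mathbf{F}}(p)=\{x:p\in\mathbf{F}_x\}$. For families $\gamma,\delta$ of sets, $\gamma\gg\delta$ means every nonempty $D\in\delta$ contains some nonempty $G\in\gamma$. $\mathrm{rise}_{\mathbf{F}}(p,U)=\{\mathrm{height}_{\mathbf{F}}(v):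 v\in\mathrm{scope}_{\mathbf{F}}(p),\ \mathrm{shoot}_{\mathbf{F}}(v)\gg\{U\}\}$; $\mathrm{Rise}_{\mathbf{F}}(X)=\{\mathrm{rise}_{\mathbf{F}}(p,U):p\in X,\ U\text{ a neighbourhood of }p\text{ in }X\}$. $\mathbf{F}$ is locally strict if each non-maximal leaf $\mathbf{F}_x$ is the disjoint union of $\mathbf{F}_s$, $s\in\mathrm{sons}(x)$; has strict branches if it has a node and for each branch $B$, $\bigcap_{x\in B}\mathbf{F}_x$ is a singleton; is open in $X$ if all leaves are open in $X$; is a foliage $\omega,\omega$-tree if its skeleton is order-isomorphic to $({}^{<\omega}\omega,\subsetneq)$. A Baire foliage tree on $X$ is an open in $X$, locally strict foliage $\omega,\omega$-tree with strict branches and $\mathbf{F}_{0_{\mathbf{F}}}=X$. $\mathbf{F}$ grows into $X$ if for every $p\in X$ and neighbourhood $U$ of $p$ there is $z\in\mathrm{scope}_{\mathbf{F}}(p)$ with $\mathrm{shoot}_{\mathbf{F}}(z)\gg\{U\}$. A $\pi$-tree on $X$ is a Baire foliage tree on $X$ that grows into $X$; a space has a $\pi$-tree if there is a $\pi$-tree on it. *)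

(* Defs.v *)
From HB Require Import structures.
From mathcomp Require Import all_boot all_order.
From mathcomp Require Import all_classical all_reals all_analysis.
Set Implicit Arguments. Unset Strict Implicit. Unset Printing Implicit Defensive.
Local Open Scope classical_set_scope.

(* Foliage omega,omega-trees: the skeleton is taken to be ({}^{<omega}omega, strict
   prefix order) itself, nodes are finite sequences of naturals. *)
Definition node := seq nat.

Definition node_lt (s t : node) : Prop := prefix s t /\ s <> t.

Definition sons (v : node) : set node := [set t | exists n : nat, t = rcons v n].

(* height of a node = size of its set of predecessors *)
Definition height (v : node) : nat := size v.

Definition root_node : node := [::].

Definition foliage (X : Type) := node -> set X.

Definition chain (B : set node) : Prop :=
  forall x y, B x -> B y -> x = y \/ node_lt x y \/ node_lt y x.

Definition branch (B : set node) : Prop :=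
  chain B /\ forall C, chain C -> B `<=` C -> C = B.

Definition shoot X (F : foliage X) (v : node) : set (set X) :=
  [set A | exists C : set node, C `<=` sons v /\ finite_set (sons v `\` C) /\
           A = \bigcup_(x in C) F x].

Definition scope X (F : foliage X) (p : X) : set node := [set x | F x p].

Definition refines T (gamma delta : set (set T)) : Prop :=
  forall D, delta D -> D !=set0 -> exists G, gamma G /\ G !=set0 /\ G `<=` D.

Definition cofin_omega : set (set nat) :=
  [set A | exists F : set nat, finite_set F /\ A = ~` F].

Definition rise X (F : foliage X) (p : X) (U : set X) : set nat :=
  [set k | exists v, scope F p v /\ refines (shoot F v) [set U] /\ k = height v].

Definition Rise (X : topologicalType) (F : foliage X) : set (set nat) :=
  [set R | exists (p : X) (U : set X), nbhs p U /\ R = rise F p U].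

Definition locally_strict X (F : foliage X) : Prop :=
  forall x : node, (exists s, sons x s) ->
    F x = \bigcup_(s in sons x) F s /\
    (forall s t, sons x s -> sons x t -> s <> t -> F s `&` F t = set0).

Definition strict_branches X (F : foliage X) : Prop :=
  (exists x : node, True) /\
  forall B, branch B -> exists p : X, \bigcap_(x in B) F x = [set p].

Definition open_foliage (X : topologicalType) (F : foliage X) : Prop :=
  forall x, open (F x).

Definition Baire_foliage_tree (X : topologicalType) (F : foliage X) : Prop :=
  open_foliage F /\ locally_strict F /\ strict_branches F /\ F root_node = setT.

Definition grows_into (X : topologicalType) (F : foliage X) : Prop :=
  forall (p : X) (U : set X), nbhs p U ->
    exists z, scope F p z /\ refines (shoot F z) [set U].

Definition pi_tree (X : topologicalType) (F : foliage X) : Prop :=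
  Baire_foliage_tree F /\ grows_into F.

Definition has_pi_tree (X : topologicalType) : Prop :=
  exists F : foliage X, pi_tree F.

(* Main.v *)
Require Import Defs.
From HB Require Import structures.
From mathcomp Require Import all_boot all_order.
From mathcomp Require Import all_classical all_reals all_analysis.
From Stdlib Require List.
Set Implicit Arguments. Unset Strict Implicit. Unset Printing Implicit Defensive.
Local Open Scope classical_set_scope.

Definition Bs (s : nat -> nat) : set node := [set v | exists k, v = mkseq s k].

Lemma take_mkseq (f : nat -> nat) k n : take k (mkseq f n) = mkseq f (minn k n).
Proof. by rewrite /mkseq -map_take take_iota. Qed.

Lemma prefix_mkseq (f : nat -> nat) j k : j <= k -> prefix (mkseq f j) (mkseq f k).
Proof.
by move=> jk; rewrite prefixE size_mkseq take_mkseq (minn_idPl jk).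
Qed.

Lemma prefix_size (u v : node) : prefix u v -> size u <= size v.
Proof. by move=> /prefixP [w ->]; rewrite size_cat leq_addr. Qed.

Lemma prefix_take_eq (u v : node) : prefix u v -> u = take (size u) v.
Proof. by rewrite prefixE => /eqP ->. Qed.

Lemma branch_Bs s : branch (Bs s).
Proof.
split.
- move=> x y [j ->] [k ->].
  case: (ltngtP j k) => [jk|kj|->]; [right; left|right; right|by left].
  + split; first exact/prefix_mkseq/ltnW.
    by move=> /(congr1 size); rewrite !size_mkseq => E; move: jk; rewrite E ltnn.
  + split; first exact/prefix_mkseq/ltnW.
    by move=> /(congr1 size); rewrite !size_mkseq => E; move: kj; rewrite E ltnn.
- move=> C hC BC; apply/seteqP; split => [v Cv|]; last by [].
  have := hC v (mkseq s (size v).+1) Cv (BC _ (ex_intro _ _ erefl)).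
  case=> [E|[[pv _]|[pv _]]].
  + by move: (congr1 size E); rewrite size_mkseq => /n_Sn.
  + exists (size v); rewrite {1}(prefix_take_eq pv) take_mkseq.
    by rewrite (minn_idPl (leqnSn _)).
  + by move: (prefix_size pv); rewrite size_mkseq ltnn.
Qed.

Section Tree.
Variables (T : Type) (F : foliage T).

Definition nextn (v : node) (x : T) : nat :=
  if pselect (exists n, F (rcons v n) x) is left e then projT1 (cid e) else 0.

Fixpoint pre (x : T) (k : nat) : node :=
  if k is k'.+1 then rcons (pre x k') (nextn (pre x k') x) else [::].

Definition code (x : T) (k : nat) : nat := nextn (pre x k) x.

Lemma pre_mkseq x k : pre x k = mkseq (code x) k.
Proof. by elim: k => [//|k IH] /=; rewrite mkseqS -IH. Qed.

Hypothesis hLS : locally_strict F.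

Lemma LS_sub v n : F (rcons v n) `<=` F v.
Proof.
have [-> _] := hLS (ex_intro _ (rcons v n) (ex_intro _ n erefl)).
by move=> x Fx; exists (rcons v n) => //; exists n.
Qed.

Lemma LS_ex v x : F v x -> exists n, F (rcons v n) x.
Proof.
have [E _] := hLS (ex_intro _ (rcons v 0) (ex_intro _ 0 erefl)).
by rewrite E => -[w [n ->] Fw]; exists n.
Qed.

Lemma LS_uniq v n m x : F (rcons v n) x -> F (rcons v m) x -> n = m.
Proof.
move=> h1 h2; apply: contrapT => nm.
have [_ D] := hLS (ex_intro _ (rcons v 0) (ex_intro _ 0 erefl)).
have := D (rcons v n) (rcons v m) (ex_intro _ n erefl) (ex_intro _ m erefl).
have ne : rcons v n <> rcons v m.
  by move=> /(congr1 (last 0)); rewrite !last_rcons.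
by move=> /(_ ne) /seteqP [/(_ x (conj h1 h2))].
Qed.

Lemma nextn_spec v x : F v x -> F (rcons v (nextn v x)) x.
Proof.
move=> /LS_ex e; rewrite /nextn; case: pselect => // e'.
exact: (projT2 (cid e')).
Qed.

Lemma pre_in x k : F [::] x -> F (pre x k) x.
Proof. by move=> h; elim: k => [//|k IH] /=; apply: nextn_spec. Qed.

Lemma in_pre v x : F v x -> v = pre x (size v).
Proof.
elim/last_ind: v => [//|u n IH] h.
have Fu := LS_sub h; have {IH}IH := IH Fu.
rewrite size_rcons /= -IH; congr rcons.
by apply: (LS_uniq h); exact: nextn_spec Fu.
Qed.

End Tree.

Lemma fin_bound (A : set nat) : finite_set A -> exists N, forall n, N <= n -> ~ A n.
Proof.
move=> /finite_fsetP [X ->]; exists (\max_(x <- finmap.enum_fset X) x).+1 => n hn /= nX.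
have := @leq_bigmax_seq _ (finmap.enum_fset X) xpredT (fun x => x) n nX isT.
by rewrite leqNgt => /negP; apply.
Qed.

Lemma size_pre T (F : foliage T) x k : size (pre F x k) = k.
Proof. by rewrite pre_mkseq size_mkseq. Qed.

Lemma mkseq_ext (f g : nat -> nat) : (forall k, mkseq f k = mkseq g k) -> f = g.
Proof.
move=> h; apply: funext => k; have := congr1 (fun s => nth 0 s k) (h k.+1).
by rewrite /= !nth_mkseq.
Qed.

Section PiTree.
Variables (X : topologicalType) (F : foliage X).
Hypothesis hpi : pi_tree F.

Let hLS : locally_strict F. Proof. by case: hpi => [[_ [h _]] _]. Qed.
Let hroot : F root_node = setT. Proof. by case: hpi => [[_ [_ [_ h]]] _]. Qed.
Let hSB : strict_branches F. Proof. by case: hpi => [[_ [_ [h _]]] _]. Qed.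
Let hopen : open_foliage F. Proof. by case: hpi => [[h _] _]. Qed.
Let hgrow : grows_into F. Proof. by case: hpi. Qed.

Lemma in_preE v x : F v x <-> v = pre F x (size v).
Proof.
split; first exact: in_pre.
by move=> ->; apply: pre_in => //; rewrite -[[::]]/root_node hroot.
Qed.

Lemma pre_inT x k : F (pre F x k) x.
Proof. by apply/in_preE; rewrite size_pre. Qed.

Lemma code_surj s : exists x, code F x = s.
Proof.
have [_ h] := hSB; have [p Hp] := h _ (branch_Bs s).
have : (\bigcap_(x in Bs s) F x) p by rewrite Hp.
move=> hp; exists p; apply/esym/mkseq_ext => k.
have /in_preE := hp _ (ex_intro _ k erefl).
by rewrite size_mkseq pre_mkseq.
Qed.

Lemma code_inj x y : code F x = code F y -> x = y.
Proof.
move=> E; have [_ h] := hSB; have [p Hp] := h _ (branch_Bs (code F x)).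
have inB z : code F z = code F x -> (\bigcap_(v in Bs (code F x)) F v) z.
  move=> Ez v [k ->]; apply/in_preE; by rewrite size_mkseq pre_mkseq Ez.
move: (inB x erefl) (inB y (esym E)); rewrite Hp => -> ->; done.
Qed.

Lemma shoot_N v (U : set X) : refines (shoot F v) [set U] -> U !=set0 ->
  exists N, forall n, N <= n -> F (rcons v n) `<=` U.
Proof.
move=> hr hU; have [G [[C [Csub [fin ->]]] [_ GU]]] := hr U erefl hU.
have finA : finite_set [set n | ~ C (rcons v n)].
  apply: (sub_finite_set _ (finite_image (fun u : node => last 0 u) fin)).
  move=> n /= nC; exists (rcons v n); last by rewrite last_rcons.
  by split => //; exists n.
have [N hN] := fin_bound finA; exists N => n /hN /= nC x Fx.
apply: GU; exists (rcons v n) => //; exact: contrapT.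
Qed.

Lemma grow_pre p (U : set X) : nbhs p U ->
  exists k N, forall n, N <= n -> F (rcons (pre F p k) n) `<=` U.
Proof.
move=> hU; have [z [zp hz]] := hgrow hU.
have [N hN] := shoot_N hz (ex_intro _ p (nbhs_singleton hU)).
by exists (size z), N; rewrite -(in_pre hLS zp).
Qed.

Lemma grow_deep p (U : set X) k0 : nbhs p U ->
  exists k N, k0 <= k /\ forall n, N <= n -> F (rcons (pre F p k) n) `<=` U.
Proof.
move=> hU.
have hU' : nbhs p (U `&` F (pre F p k0)).
  apply: filterI => //; apply: open_nbhs_nbhs; split; [exact: hopen|exact: pre_inT].
have [k [N hN]] := grow_pre hU'.
case: (leqP k0 k) => hk.
  by exists k, N; split => // n /hN h x /h [].
pose n := maxn N (code F p k).+1.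
pose s i := if i < k then code F p i else if i == k then n else 0.
have [x hx] := code_surj s.
have xin : F (rcons (pre F p k) n) x.
  apply/in_preE; rewrite size_rcons size_pre !pre_mkseq hx mkseqS.
  rewrite /s ltnn eqxx; congr rcons.
  apply: (@eq_from_nth _ 0); rewrite !size_mkseq // => i ik.
  by rewrite !nth_mkseq // ik.
have [_ /in_preE] := hN n (leq_maxl _ _) _ xin.
rewrite size_pre !pre_mkseq => /(congr1 (fun s => nth 0 s k)).
rewrite !nth_mkseq // hx /s ltnn eqxx => E.
by move: (leq_maxr N (code F p k).+1); rewrite -/n E ltnn.
Qed.

Lemma rise_pre : refines cofin_omega (Rise F) -> forall p (U : set X), nbhs p U ->
  exists K, forall k, K <= k -> exists N, forall n, N <= n -> F (rcons (pre F p k) n) `<=` U.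
Proof.
move=> hR p U hU.
have Dne : rise F p U !=set0.
  have [z [zp hz]] := hgrow hU; by exists (height z), z.
have [G [[Fi [finFi ->]] [_ GD]]] := hR _ (ex_intro _ p (ex_intro _ U (conj hU erefl))) Dne.
have [K hK] := fin_bound finFi; exists K => k /hK nFi.
have [v [vp [hv ->]]] := GD k nFi.
have [N hN] := shoot_N hv (ex_intro _ p (nbhs_singleton hU)).
by exists N; rewrite /height -(in_pre hLS vp).
Qed.

End PiTree.

Lemma foldr_minn_le d t x : x \in t -> foldr minn d t <= x.
Proof.
elim: t => [//|y t IH] /=; rewrite inE => /orP [/eqP ->|xt]; first exact: geq_minl.
by rewrite geq_min IH ?orbT.
Qed.

Lemma foldr_minn_mem d t : foldr minn d t \in d :: t.
Proof.
elim: t => [|y t IH] /=; first by rewrite inE.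
case: (leqP y (foldr minn d t)) => h.
  by rewrite !inE eqxx orbT.
move: IH; rewrite !inE => /orP [->|->] //.
by rewrite !orbT.
Qed.

Definition Mn (t : seq nat) := foldr minn (head 0 t) t.

Lemma Mn_le t x : x \in t -> Mn t <= x.
Proof. exact: foldr_minn_le. Qed.

Lemma Mn_mem t : 0 < size t -> Mn t \in t.
Proof.
case: t => [//|y t] _; have := foldr_minn_mem y (y :: t).
by rewrite /Mn /= inE => /orP [/eqP ->|//]; rewrite inE eqxx.
Qed.

Lemma Mn_eq t M : M \in t -> (forall x, x \in t -> M <= x) -> Mn t = M.
Proof.
move=> Mt hM; apply/eqP; rewrite eqn_leq Mn_le //=; apply: hM; apply: Mn_mem.
by case: t Mt.
Qed.

Definition enc (t : seq nat) : seq nat :=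
  let M := Mn t in let i := index M t in
  (M * size t + i) :: (map (subn^~ M.+1) (take i t) ++ map (subn^~ M) (drop i.+1 t)).

Definition dec (m : nat) (ds : seq nat) : seq nat :=
  let d := head 0 ds in let M := d %/ m in let i := d %% m in
  let rest := behead ds in
  map (addn M.+1) (take i rest) ++ M :: map (addn M) (drop i rest).

Lemma index_Mn_lt t : 0 < size t -> index (Mn t) t < size t.
Proof. by move=> h; rewrite index_mem Mn_mem. Qed.

Lemma size_enc t : 0 < size t -> size (enc t) = size t.
Proof.
move=> h; have hi := index_Mn_lt h.
rewrite /enc /= size_cat !size_map size_take size_drop hi.
by rewrite -addSn addnC subnK.
Qed.

Lemma take_gt_Mn t x : x \in take (index (Mn t) t) t -> Mn t < x.
Proof.
move=> xt; rewrite ltn_neqAle Mn_le ?andbT; last exact: mem_take xt.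
apply/negP => /eqP E; move: xt; rewrite -E => hin.
set i := index (Mn t) t in hin *.
have h1 : index (Mn t) (take i t) < size (take i t) by rewrite index_mem.
have h2 : i = index (Mn t) (take i t).
  have h2 : index (Mn t) t = index (Mn t) (take i t ++ drop i t) by rewrite cat_take_drop.
  by rewrite index_cat hin in h2.
have h3 : size (take i t) <= i.
  by rewrite size_take; case: ifP => // /negbT; rewrite -leqNgt.
by move: (leq_trans h1 h3); rewrite -h2 ltnn.
Qed.

Lemma dec_enc t : 0 < size t -> dec (size t) (enc t) = t.
Proof.
move=> h; have hi := index_Mn_lt h.
set M := Mn t; set i := index M t.
rewrite /dec /enc /= -/M -/i.
have -> : (M * size t + i) %/ size t = M.
  by rewrite divnDl ?dvdn_mull // mulnK // divn_small // addn0.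
have -> : (M * size t + i) %% size t = i.
  by rewrite modnMDl modn_small.
have szt : size (map (subn^~ M.+1) (take i t)) = i.
  by rewrite size_map size_take hi.
rewrite take_size_cat // drop_size_cat //.
rewrite -map_comp -[in RHS](cat_take_drop i t); congr cat.
  rewrite map_id_in // => x /take_gt_Mn /= hx.
  by rewrite subnKC.
rewrite (drop_nth 0 hi) -/M; congr cons.
  by rewrite nth_index // Mn_mem.
rewrite -map_comp map_id_in // => x /= hx; rewrite subnKC // Mn_le //.
by apply: mem_drop hx.
Qed.

Lemma size_dec m ds : 0 < m -> size ds = m -> size (dec m ds) = m.
Proof.
move=> m0 sz; rewrite /dec size_cat /= !size_map size_take size_drop size_behead sz.
have hi : head 0 ds %% m <= m.-1 by rewrite -ltnS prednK // ltn_pmod.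
case: ltnP => h.
  by rewrite addnS subnKC ?prednK // ltnW.
have -> : head 0 ds %% m = m.-1 by apply/eqP; rewrite eqn_leq hi.
by rewrite subnn addn1 prednK.
Qed.

Lemma enc_dec m ds : 0 < m -> size ds = m -> enc (dec m ds) = ds.
Proof.
move=> m0 sz; case: ds sz => [|d rest] sz; first by move: m0; rewrite -sz.
have szr : size rest = m.-1 by rewrite -sz.
set M := d %/ m; set i := d %% m.
have him : i < m by rewrite ltn_pmod.
have hir : i <= size rest by rewrite szr -ltnS prednK.
have E : dec m (d :: rest) = map (addn M.+1) (take i rest) ++ M :: map (addn M) (drop i rest) by [].
have A1 : M \notin map (addn M.+1) (take i rest).
  by apply/mapP => -[x _] Ex; move: (leq_addr x M.+1); rewrite -Ex ltnn.
have hM : Mn (dec m (d :: rest)) = M.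
  apply: Mn_eq; first by rewrite E mem_cat inE eqxx orbT.
  move=> x; rewrite E mem_cat inE => /orP [/mapP [y _ ->]|/orP [/eqP ->|/mapP [y _ ->]]].
  - by rewrite addSn leqW // leq_addr.
  - by [].
  - by rewrite leq_addr.
have szA : size (map (addn M.+1) (take i rest)) = i by rewrite size_map size_takel.
have hidx : index M (dec m (d :: rest)) = i.
  by rewrite E index_cat (negbTE A1) szA /= eqxx addn0.
rewrite /enc hM hidx (size_dec m0 sz).
have -> : take i (dec m (d :: rest)) = map (addn M.+1) (take i rest).
  by rewrite E take_size_cat.
have -> : drop i.+1 (dec m (d :: rest)) = map (addn M) (drop i rest).
  by rewrite E -cat1s catA drop_size_cat // size_cat szA addn1.
rewrite -!map_comp !map_id_in; first by rewrite cat_take_drop /M /i -divn_eq.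
  by move=> x _ /=; rewrite addKn.
by move=> x _ /=; rewrite addKn.
Qed.

Lemma enc_inj t t' : 0 < size t -> size t = size t' -> enc t = enc t' -> t = t'.
Proof.
move=> h sz E; rewrite -(dec_enc h) -(dec_enc (t := t')) -?sz // sz E //.
Qed.

Lemma enc_big t N : 0 < size t -> N * size t <= head 0 (enc t) ->
  forall x, x \in t -> N <= x.
Proof.
move=> h hN x xt; apply: leq_trans (Mn_le xt).
have hi := index_Mn_lt h; move: hN; rewrite /enc /= => hN.
have : N * size t < (Mn t).+1 * size t.
  by apply: (leq_ltn_trans hN); rewrite mulSn addnC ltn_add2r.
by rewrite ltn_pmul2r // ltnS.
Qed.

Section Code.
Variable Dn : nat -> bool.

Definition act (j : nat) : bool := if j is n.+1 then Dn n else true.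
Definition L (r : nat) : seq nat := [seq j <- iota 0 r.+1 | act j].
Definition mm r := size (L r).

Lemma mem_L j r : (j \in L r) = (j <= r) && act j.
Proof. by rewrite mem_filter mem_iota add0n ltnS andbC. Qed.

Lemma mm_gt0 r : 0 < mm r.
Proof. by rewrite /mm lt0n size_eq0; apply/eqP => E; move: (mem_L 0 r); rewrite E. Qed.

Lemma L_uniq r : uniq (L r).
Proof. by rewrite filter_uniq // iota_uniq. Qed.

Definition tup (a : nat -> nat -> nat) r := [seq a j (r - j) | j <- L r].

Lemma size_tup a r : size (tup a r) = mm r.
Proof. by rewrite size_map. Qed.

Definition P (a : nat -> nat -> nat) R := flatten [seq enc (tup a r) | r <- iota 0 R].

Fixpoint st R := if R is R'.+1 then st R' + mm R' else 0.

Lemma P_S a R : P a R.+1 = P a R ++ enc (tup a R).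
Proof. by rewrite /P -addn1 iotaD map_cat flatten_cat /= cats0. Qed.

Lemma size_P a R : size (P a R) = st R.
Proof.
elim: R => [//|R IH]; rewrite P_S size_cat IH size_enc ?size_tup ?mm_gt0 //.
Qed.

Lemma st_ge R : R <= st R.
Proof. by elim: R => [//|R IH] /=; rewrite -addn1 leq_add // mm_gt0. Qed.

Lemma st_lt R : st R < st R.+1.
Proof. by rewrite /= -{1}[st R]addn0 ltn_add2l mm_gt0. Qed.

Lemma P_prefix a R k : take (st R) (P a (R + k)) = P a R.
Proof.
elim: k => [|k IH]; first by rewrite addn0 -(size_P a R) take_size.
rewrite addnS P_S takel_cat ?IH // size_P.
elim: k {IH} => [|k IHk]; first by rewrite addn0.
by rewrite addnS /= (leq_trans IHk) // leq_addr.
Qed.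

Lemma st_mono R k : st R <= st (R + k).
Proof. by elim: k => [|k IH]; rewrite ?addn0 // addnS /= (leq_trans IH) // leq_addr. Qed.

Definition Phi a (t : nat) : nat := nth 0 (P a t.+1) t.

Lemma nth_P a R R' i : i < st R -> R <= R' -> nth 0 (P a R) i = nth 0 (P a R') i.
Proof.
move=> hi /subnKC <-; by rewrite -(P_prefix a R (R' - R)) nth_take.
Qed.

Lemma P_mkseq a R : P a R = mkseq (Phi a) (st R).
Proof.
apply: (@eq_from_nth _ 0); first by rewrite size_P size_mkseq.
move=> i; rewrite size_P => hi; rewrite nth_mkseq // /Phi.
rewrite (@nth_P a R (maxn R i.+1) i hi (leq_maxl R i.+1)) (@nth_P a i.+1 (maxn R i.+1)) //.
  exact: leq_trans (ltnSn i) (st_ge _).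
exact: leq_maxr.
Qed.

Lemma Phi_st a R : Phi a (st R) = head 0 (enc (tup a R)).
Proof.
rewrite /Phi -(@nth_P a R.+1 (st R).+1 (st R) (st_lt R)); last by rewrite ltnS st_ge.
rewrite P_S nth_cat size_P ltnn subnn; by case: (enc _).
Qed.

Definition rd (s : nat -> nat) r := mkseq (fun i => s (st r + i)) (mm r).

Definition bdec (s : nat -> nat) (j h : nat) : nat :=
  nth 0 (dec (mm (h + j)) (rd s (h + j))) (index j (L (h + j))).

Lemma map_nth_index (l D : seq nat) : uniq l -> size D = size l ->
  [seq nth 0 D (index j l) | j <- l] = D.
Proof.
move=> ul sz; apply: (@eq_from_nth _ 0); first by rewrite size_map sz.
move=> k; rewrite size_map => hk; rewrite (nth_map 0) // index_uniq //.
Qed.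

Lemma tup_bdec s r : tup (bdec s) r = dec (mm r) (rd s r).
Proof.
have -> : tup (bdec s) r = [seq nth 0 (dec (mm r) (rd s r)) (index j (L r)) | j <- L r].
  apply/eq_in_map => j; rewrite mem_L => /andP [jr _]; by rewrite /bdec subnK.
by rewrite map_nth_index ?L_uniq // size_dec ?mm_gt0 // size_mkseq.
Qed.

Lemma P_bdec s R : P (bdec s) R = mkseq s (st R).
Proof.
elim: R => [//|R IH]; rewrite P_S IH tup_bdec enc_dec ?mm_gt0 ?size_mkseq //=.
rewrite /mkseq iotaD map_cat add0n; congr cat.
by rewrite /rd /mkseq -[st R]addn0 iotaDl -map_comp addn0.
Qed.

Lemma Phi_bdec s : Phi (bdec s) = s.
Proof.
apply: funext => t; rewrite /Phi P_bdec nth_mkseq //.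
exact: leq_trans (ltnSn t) (st_ge _).
Qed.

Lemma tup_ext a a' r : (forall j h, act j -> a j h = a' j h) -> tup a r = tup a' r.
Proof.
move=> h; apply/eq_in_map => j; rewrite mem_L => /andP [_ aj]; exact: h.
Qed.

Lemma Phi_ext a a' : (forall j h, act j -> a j h = a' j h) -> Phi a = Phi a'.
Proof.
move=> h; apply: funext => t; rewrite /Phi /P; congr (nth 0 (flatten _) t).
by apply: eq_map => r; rewrite (tup_ext r h).
Qed.

Lemma P_ext_lt a a' R : (forall j h, j < R -> h < R -> a j h = a' j h) ->
  P a R = P a' R.
Proof.
move=> h; rewrite /P; congr flatten; apply/eq_in_map => r; rewrite mem_iota add0n => /andP [_ rR].
congr enc; apply/eq_in_map => j; rewrite mem_L => /andP [jr _].
by apply: h; [exact: leq_ltn_trans jr rR|exact: leq_ltn_trans (leq_subr _ _) rR].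
Qed.

Lemma P_eq_tup a a' R : P a R = P a' R -> forall r, r < R -> tup a r = tup a' r.
Proof.
move=> E r rR.
have E1 : P a r.+1 = P a' r.+1.
  by rewrite -(P_prefix a r.+1 (R - r.+1)) -(P_prefix a' r.+1 (R - r.+1)) subnKC // E.
have E0 : P a r = P a' r.
  by rewrite -(P_prefix a r 1) -(P_prefix a' r 1) addn1 E1.
move: E1; rewrite !P_S E0 => /(congr1 (drop (st r))).
rewrite !drop_size_cat ?size_P // => /enc_inj; apply; by rewrite ?size_tup ?mm_gt0.
Qed.

Lemma tup_nth a r j : j \in L r -> nth 0 (tup a r) (index j (L r)) = a j (r - j).
Proof. by move=> jL; rewrite (nth_map 0) ?index_mem // nth_index. Qed.

Lemma Phi_inj a a' : Phi a = Phi a' -> forall j h, act j -> a j h = a' j h.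
Proof.
move=> E j h aj.
have EP : P a (h + j).+1 = P a' (h + j).+1 by rewrite !P_mkseq E.
have jL : j \in L (h + j) by rewrite mem_L leq_addl aj.
have := congr1 (fun t => nth 0 t (index j (L (h + j)))) (P_eq_tup EP (ltnSn _)).
by rewrite /= !tup_nth // addnK.
Qed.

Lemma agree_lt a a' r : P a' r = P a r ->
  forall j h, j \in L r -> h < r - j -> a' j h = a j h.
Proof.
move=> E j h jL; rewrite ltn_subRL addnC => hr.
have jL' : j \in L (h + j) by move: jL; rewrite !mem_L leq_addl => /andP [_ ->].
have := congr1 (fun t => nth 0 t (index j (L (h + j)))) (P_eq_tup E hr).
by rewrite /= !tup_nth // addnK.
Qed.

Lemma son_big a r N : N * mm r <= Phi a (st r) ->
  forall j, j \in L r -> N <= a j (r - j).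
Proof.
rewrite Phi_st => hN j jL; apply: (enc_big (t := tup a r)); rewrite ?size_tup ?mm_gt0 //.
exact: map_f.
Qed.

End Code.

Lemma prefix_cmp (u w : node) : prefix u w \/ prefix w u ->
  u = w \/ node_lt u w \/ node_lt w u.
Proof.
case: (eqVneq u w) => [->|ne]; first by left.
by case=> h; right; [left|right]; split => // E; move: ne; rewrite E eqxx.
Qed.

Lemma cmp_prefix (u w : node) : u = w \/ node_lt u w \/ node_lt w u ->
  prefix u w \/ prefix w u.
Proof. by case=> [->|[[h _]|[h _]]]; [left; exact: prefix_refl|left|right]. Qed.

Lemma prefix_comparable (u w v : node) : prefix u v -> prefix w v ->
  prefix u w \/ prefix w u.
Proof.
move=> /prefix_take_eq hu /prefix_take_eq hw.
case: (leqP (size u) (size w)) => h.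
  by left; rewrite prefixE {2}hu hw take_takel.
by right; rewrite prefixE {2}hw hu take_takel // ltnW.
Qed.

Lemma prefix_eq_size (u w : node) : prefix u w -> size w <= size u -> u = w.
Proof.
move=> /prefix_take_eq hu hs; rewrite hu take_oversize //.
Qed.

Lemma branch_is_Bs B : branch B -> exists s, B = Bs s.
Proof.
move=> [hc hmax].
have add u : (forall w, B w -> prefix u w \/ prefix w u) -> B u.
  move=> hu; suff E : B `|` [set u] = B by rewrite -E; right.
  apply: hmax; last by move=> x Bx; left.
  move=> x y [Bx|->] [By|->].
  - exact: hc.
  - by apply: prefix_cmp; case: (hu x Bx); [right|left].
  - exact/prefix_cmp/hu.
  - by left.
have pclosed v u : B v -> prefix u v -> B u.
  move=> Bv uv; apply: add => w Bw.
  case: (cmp_prefix (hc _ _ Bv Bw)) => h.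
    by left; exact: (@prefix_trans _ v u w uv h).
  exact: prefix_comparable uv h.
have unb v : B v -> exists w, B w /\ size v < size w.
  move=> Bv; case: (pselect (exists w, B w /\ size v < size w)) => // nh.
  exfalso; apply nh; exists (rcons v 0); split; last by rewrite size_rcons.
  apply: add => w Bw; right.
  case: (cmp_prefix (hc _ _ Bv Bw)) => h; last first.
    exact: (@prefix_trans _ v w (rcons v 0) h (prefix_rcons _ _)).
  case: (leqP (size w) (size v)) => hs.
    by rewrite -(prefix_eq_size h hs); exact: prefix_rcons.
  by exfalso; apply nh; exists w.
have ex k : exists v, B v /\ size v = k.
  elim: k => [|k [v [Bv sv]]].
    by exists [::]; split => //; apply: add => w _; left; exact: prefix0s.
  have [w [Bw sw]] := unb v Bv.
  exists (take k.+1 w); split; first exact: pclosed Bw (prefix_take _ _).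
  by rewrite size_takel // -sv.
have uq v w : B v -> B w -> size v = size w -> v = w.
  move=> Bv Bw sz; case: (cmp_prefix (hc _ _ Bv Bw)) => h.
    by rewrite (prefix_eq_size h) // sz.
  by rewrite (prefix_eq_size h) // sz.
pose V k := projT1 (cid (ex k)).
have BV k : B (V k) by case: (projT2 (cid (ex k))).
have sV k : size (V k) = k by case: (projT2 (cid (ex k))).
exists (fun k => nth 0 (V k.+1) k).
have VE k : V k = mkseq (fun k => nth 0 (V k.+1) k) k.
  elim: k => [|k IH]; first by apply/size0nil/sV.
  rewrite mkseqS -IH.
  have -> : V k = take k (V k.+1).
    apply: uq; [exact: BV|exact: pclosed (BV _) (prefix_take _ _)|].
    by rewrite size_takel sV.
  by rewrite -take_nth ?sV // take_oversize // sV.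
apply/seteqP; split => v.
  by move=> Bv; exists (size v); rewrite -VE; apply: uq => //; rewrite sV.
by move=> [k ->]; rewrite -VE.
Qed.
Definition basicP (I : Type) (K : I -> topologicalType) (f : forall i, K i)
  (A : set (forall i, K i)) : Prop :=
  exists s : seq {i : I & set (K i)},
   (forall e, List.In e s -> nbhs (f (projT1 e)) (projT2 e)) /\
   (forall g : forall i, K i, (forall e, List.In e s -> projT2 e (g (projT1 e))) -> A g).

Lemma basic_filter (I : Type) (K : I -> topologicalType) (f : forall i, K i) :
  Filter (basicP f).
Proof.
split.
- by exists [::].
- move=> A B [s [s1 s2]] [t [t1 t2]]; exists (s ++ t); split.
  + move=> e he; case: (List.in_app_or s t e he); [exact: s1|exact: t1].
  + move=> g hg; split; [apply: s2|apply: t2] => e he; apply: hg.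
    * by apply: List.in_or_app; left.
    * by apply: List.in_or_app; right.
- move=> A B AB [s [s1 s2]]; exists s; split => // g /s2; exact: AB.
Qed.

Lemma prod_nbhs_basic (I : Type) (K : I -> topologicalType) (f : prod_topology K)
  (U : set (prod_topology K)) : nbhs f U -> basicP f U.
Proof.
have FG := basic_filter f.
have := (@cvg_sup (prod_topology K) I (fun i => Topological.class
    (initial_topology (fun f : (forall i, K i) => f i))) (basicP f) f FG).2.
move=> h; apply: h => i A.
rewrite nbhsE /=. move=> [B [[C oC <-] Cf] BA].
exists [:: existT _ i C]; split.
- move=> e [<-|[]] /=. by apply: open_nbhs_nbhs.
- move=> g hg; apply: BA; exact: (hg _ (or_introl erefl)).
Qed.
Lemma proj_nbhs (I : Type) (K : I -> topologicalType) (f : prod_topology K) (i : I)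
  (C : set (K i)) : nbhs (f i) C -> nbhs f [set g : prod_topology K | C (g i)].
Proof.
move=> hC.
have := (@cvg_sup (prod_topology K) I (fun i => Topological.class
    (initial_topology (fun f : (forall i, K i) => f i))) (nbhs f) f).
move=> /(_ _) [+ _] => /(_ (@cvg_id _ _)) /(_ i).
move=> h; apply: h.
rewrite nbhsE /=. rewrite nbhsE in hC. move: hC => [B [oB Bf] BC]. exists ((fun g : forall i, K i => g i) @^-1` B); last by move=> g /BC.
split => //. exists B => //.
Qed.

Lemma pre_son (X : topologicalType) (F : foliage X) : pi_tree F ->
  forall x x' k, (forall h, h < k -> code F x' h = code F x h) ->
  F (rcons (pre F x k) (code F x' k)) x'.
Proof.
move=> hpi x x' k hk; apply/(in_preE hpi).
rewrite size_rcons size_pre !pre_mkseq mkseqS; congr rcons.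
apply: (@eq_from_nth _ 0); rewrite !size_mkseq // => i ik.
by rewrite !nth_mkseq // hk.
Qed.

Lemma list_bound (T : Type) (s : seq T) (Q : T -> nat -> Prop) :
  (forall e N N', N <= N' -> Q e N -> Q e N') ->
  (forall e, List.In e s -> exists N, Q e N) ->
  exists N, forall e, List.In e s -> Q e N.
Proof.
move=> mono; elim: s => [|e s IH] h; first by exists 0.
have [N1 h1] := h e (or_introl erefl).
have [N2 h2] := IH (fun e' he' => h e' (or_intror he')).
exists (maxn N1 N2) => e' [<-|he'].
  exact: mono (leq_maxl _ _) h1.
exact: mono (leq_maxr _ _) (h2 _ he').
Qed.

Lemma nbhs_forall_lt (Z : topologicalType) (z : Z) (Q : nat -> set Z) R :
  (forall n, nbhs z (Q n)) -> nbhs z [set x | forall n, n < R -> Q n x].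
Proof.
move=> hQ; elim: R => [|R IH].
  by apply: filterS (@filterT _ (nbhs z) _) => x _ n.
apply: filterS (filterI IH (hQ R)) => x [h1 h2] n; rewrite ltnS leq_eqVlt.
by case/orP => [/eqP ->|/h1].
Qed.

Lemma code_agree (Xt : topologicalType) (F : foliage Xt) : pi_tree F ->
  forall x x' R, F (pre F x R) x' -> forall h, h < R -> code F x' h = code F x h.
Proof.
move=> hpi x x' R /(in_pre (hpi.1.2.1)); rewrite size_pre !pre_mkseq => E h hR.
by have := congr1 (fun t => nth 0 t h) E; rewrite /= !nth_mkseq.
Qed.

Section Main.
Local Unset Implicit Arguments.
Variables (Lambda : Type) (X : Lambda -> topologicalType)
  (H : forall l, foliage (X l)) (Y : topologicalType) (FY : foliage Y)
  (f : Lambda -> nat).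
Hypotheses (hf : injective f) (hH : forall l, pi_tree (H l))
  (hR : forall l, refines cofin_omega (Rise (H l))) (hY : pi_tree FY).

Definition gopt (n : nat) : option Lambda :=
  if pselect (exists l, f l = n) is left e then Some (projT1 (cid e)) else None.

Lemma gopt_f l : gopt (f l) = Some l.
Proof.
rewrite /gopt; case: pselect => [e|]; last by case; exists l.
by congr Some; apply: hf; exact: (projT2 (cid e)).
Qed.

Lemma gopt_some n l : gopt n = Some l -> f l = n.
Proof. by rewrite /gopt; case: pselect => // e [<-]; exact: (projT2 (cid e)). Qed.

Definition Dn n : bool := if gopt n is Some _ then true else false.

Local Notation Z := (Y * prod_topology X)%type.

Definition cd (p : Z) (j : nat) : nat -> nat :=
  if j is n.+1 then (if gopt n is Some l then code (H l) (p.2 l) else fun _ => 0)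
  else code FY p.1.

Lemma cd_f p l : cd p (f l).+1 = code (H l) (p.2 l).
Proof. by rewrite /cd gopt_f. Qed.

Definition FO : foliage Z := fun v => [set p | v = mkseq (Phi Dn (cd p)) (size v)].

Lemma cd_surj s : exists p : Z, Phi Dn (cd p) = s.
Proof.
pose b := bdec Dn s.
have [y hy] := code_surj hY (b 0).
have hx l : exists x, code (H l) x = b (f l).+1 := code_surj (hH l) _.
pose g : prod_topology X := fun l => projT1 (cid (hx l)).
exists (y, g); rewrite -(Phi_bdec Dn s); apply: Phi_ext => -[|n] h /=; first by rewrite hy.
rewrite /Dn; case E: (gopt n) => [l|] // _.
by rewrite /g (projT2 (cid (hx l))) (gopt_some _ _ E).
Qed.

Lemma cd_inj p q : Phi Dn (cd p) = Phi Dn (cd q) -> p = q.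
Proof.
move=> /Phi_inj E; case: p q E => [y x] [y' x'] E.
have ey : y = y'.
  by apply: (code_inj hY); apply: funext => h; exact: (E 0 h isT).
have ex : x = x'.
  apply: functional_extensionality_dep => l; apply: (code_inj (hH l)).
  apply: funext => h; have := E (f l).+1 h; rewrite !cd_f /= /Dn gopt_f; by apply.
by rewrite ey ex.
Qed.

Lemma FO_root : FO root_node = setT.
Proof. by apply/seteqP; split. Qed.

Lemma FO_LS : locally_strict FO.
Proof.
move=> x _; split.
- apply/seteqP; split => p.
  + move=> hp; exists (rcons x (Phi Dn (cd p) (size x))); first by eexists.
    by rewrite /FO /= size_rcons mkseqS -hp.
  + move=> [_ [n ->]]; rewrite /FO /= size_rcons mkseqS => /rcons_inj [E _]; exact: E.
- move=> s t [n ->] [m ->] ne; apply/seteqP; split => // p [] /=.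
  by rewrite /FO /= !size_rcons => h1 h2; apply: ne; rewrite h1 h2.
Qed.

Lemma FO_SB : strict_branches FO.
Proof.
split; first by exists [::].
move=> B /branch_is_Bs [s ->].
have [p hp] := cd_surj s.
exists p; apply/seteqP; split => q.
- move=> hq; apply: cd_inj; rewrite hp; apply/mkseq_ext => k.
  by move: (hq _ (ex_intro _ k erefl)); rewrite /FO /= size_mkseq => ->.
- by move=> -> v [k ->]; rewrite /FO /= size_mkseq hp.
Qed.

Lemma FO_open : open_foliage FO.
Proof.
move=> v; rewrite openE => p hp; rewrite /interior.
move: hp; rewrite /FO /=; set R := size v => hp.
pose A := FY (pre FY p.1 R).
pose Q n : set (prod_topology X) :=
  [set x | forall l, gopt n = Some l -> H l (pre (H l) (p.2 l) R) (x l)].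
pose B := [set x | forall n, n < R -> Q n x].
have hA : nbhs p.1 A.
  by apply: open_nbhs_nbhs; split; [exact: hY.1.1|exact: pre_inT].
have hB : nbhs p.2 B.
  apply: nbhs_forall_lt => n; rewrite /Q; case E: (gopt n) => [l|].
    apply: filterS (@proj_nbhs _ X p.2 l (H l (pre (H l) (p.2 l) R)) _).
      by move=> x hx l' [<-].
    by apply: open_nbhs_nbhs; split; [exact: (hH l).1.1|exact: pre_inT].
  by apply: filterS (@filterT _ (nbhs p.2) _) => x _ l'.
exists (A, B) => //= -[y x] /= [hy hx].
have EP : P Dn (cd (y, x)) R = P Dn (cd p) R.
  apply: P_ext_lt => -[|n] h jR hR' /=.
    exact: (code_agree hY hy).
  case E: (gopt n) => [l|] //.
  exact: (code_agree (hH l) (hx n (ltnW jR) l E)).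
have := congr1 (take R) EP; rewrite !P_mkseq !take_mkseq (minn_idPl (st_ge _ _)).
by rewrite {1}hp => ->.
Qed.

Lemma FO_grows : grows_into FO.
Proof.
move=> [y x] U hU.
case: hU => -[A B] /= [hA hB] sub.
have [s [hs1 hs2]] := prod_nbhs_basic hB.
have [R0 hR0] : exists R0, forall e, List.In e s -> forall r, R0 <= r ->
    (f (projT1 e)).+1 <= r /\ exists N, forall n, N <= n ->
    H (projT1 e) (rcons (pre (H (projT1 e)) (x (projT1 e)) (r - (f (projT1 e)).+1)) n)
      `<=` projT2 e.
  apply: list_bound.
    by move=> e N N' NN' h r hr; exact: h (leq_trans NN' hr).
  move=> [l V] /hs1 /= hV.
  have [K hK] := rise_pre (hH l) (hR l) hV.
  exists ((f l).+1 + K) => r hr; split; first exact: leq_trans (leq_addr _ _) hr.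
  by apply: hK; rewrite leq_subRL // (leq_trans (leq_addr K _) hr).
have [r [NY [hr hNY]]] := grow_deep hY R0 hA.
have [N1 hN1] : exists N, forall e, List.In e s -> forall n, N <= n ->
    H (projT1 e) (rcons (pre (H (projT1 e)) (x (projT1 e)) (r - (f (projT1 e)).+1)) n)
      `<=` projT2 e.
  apply: list_bound.
    by move=> e N N' NN' h n hn; exact: h (leq_trans NN' hn).
  by move=> e he; have [_ hN] := hR0 e he r hr.
pose N := maxn NY N1.
pose z := mkseq (Phi Dn (cd (y, x))) (st Dn r).
exists z; split; first by rewrite /scope /FO /= /z size_mkseq.
move=> D -> _.
pose C := [set w : node | exists2 d, N * mm Dn r <= d & w = rcons z d].
exists (\bigcup_(w in C) FO w); split; [exists C; split; [|split] | split].
- by move=> w [d _ ->]; exists d.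
- apply: (sub_finite_set _ (finite_image (rcons z) (finite_II (N * mm Dn r)))).
  move=> w [[n ->] nC]; exists n => //; rewrite /= ltnNge; apply/negP => hn.
  by apply: nC; exists n.
- by [].
- pose s' t := if t < st Dn r then Phi Dn (cd (y, x)) t else N * mm Dn r.
  have [q hq] := cd_surj s'.
  exists q; exists (rcons z (N * mm Dn r)); first by exists (N * mm Dn r).
  rewrite /FO /= size_rcons /z size_mkseq mkseqS hq /s' ltnn; congr rcons.
  apply: (@eq_from_nth _ 0); rewrite !size_mkseq // => i hi.
  by rewrite !nth_mkseq // hi.
- move=> q [w [d hd ->]]; rewrite /FO /= size_rcons /z size_mkseq mkseqS.
  move=> /rcons_inj [Ez Ed].
  have EP : P Dn (cd q) r = P Dn (cd (y, x)) r by rewrite !P_mkseq -Ez.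
  have hbig : N * mm Dn r <= Phi Dn (cd q) (st Dn r) by rewrite -Ed.
  have big := son_big hbig.
  have agr := agree_lt EP.
  have L0 : 0 \in L Dn r by rewrite mem_L.
  apply: sub; split.
  + apply: (hNY (code FY q.1 r)).
      apply: leq_trans (leq_maxl NY N1) _; have := big 0 L0; by rewrite subn0.
    apply: pre_son => // h hh; have := agr 0 h L0; rewrite subn0; by apply.
  + apply: hs2 => -[l V] hin /=.
    have [jr _] := hR0 _ hin r hr; move: jr => /= jr.
    have jL : (f l).+1 \in L Dn r by rewrite mem_L jr /= /Dn gopt_f.
    apply: (hN1 _ hin (code (H l) (q.2 l) (r - (f l).+1))).
      apply: leq_trans (leq_maxr NY N1) _; have := big _ jL; by rewrite cd_f.
    apply: pre_son => // h hh; have := agr _ h jL hh; by rewrite !cd_f.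
Qed.

Lemma FO_pi : pi_tree FO.
Proof.
split; last exact: FO_grows.
split; first exact: FO_open.
split; first exact: FO_LS.
split; first exact: FO_SB.
exact: FO_root.
Qed.

End Main.

Unset Implicit Arguments. Set Strict Implicit.

Theorem corollary10 (Lambda : Type) (X : Lambda -> topologicalType)
  (H : forall l : Lambda, foliage (X l)) (Y : topologicalType) :
  [set: Lambda] !=set0 -> countable [set: Lambda] ->
  (forall l, pi_tree (H l)) ->
  (forall l, refines cofin_omega (Rise (H l))) ->
  has_pi_tree Y ->
  has_pi_tree (Y * prod_topology X)%type.
Proof.
move=> _ /countable_injP [f hf] hH hR [FY hY].
have hf' : injective f by move=> a b; apply: hf; exact: in_setT.
by eexists; apply: (FO_pi _ _ _ _ _ _ hf' hH hR hY).
Qed.
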